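(* In the safe linear bandit setting with ROFUL as described in the context (with all its standing assumptions), on the event $\mathcal{E}_{\mathrm{conf}}$, for all $t\in[T]$, $$\theta^\top(x_*-\tilde x_t)\le\frac{2}{\nu}\beta_t\|x_t\|_{V_t^{-1}}.$$
   Context: Safe linear bandit setting: at round $t$ the learner plays $x_t$ in a closed set $\mathcal{X}\subseteq\mathbb{R}^d$ and observes $y_t=\theta^\top x_t+\epsilon_t$, $z_t=a^\top x_t+\eta_t$, with $\theta,a$ unknown and $b>0$ known; $\mathcal{Y}=\{x\in\mathcal{X}:a^\top x\le b\}$, $x_*\in\arg\max_{\mathcal{Y}}\theta^\top x$. Standing assumptions: $\mathcal{X}$ star-convex w.r.t. the origin, $\|x\|\le1$ on $\mathcal{X}$, $\theta^\top x_*>0$; $\|a\|\le S_a$, $\|\theta\|\le S_\theta$, $S=\max(S_a,S_\theta)$, $\nu=b/S_a\le1$. Parameters $\rho>0$, $\delta\in(0,1)$, $\lambda\ge1$. ROFUL: $V_t=\lambda I+\sum_{k<t}x_kx_k^\top$, $\hat a_t=V_t^{-1}\sum_{k<t}x_kz_k$, $\hat\theta_t=V_t^{-1}\sum_{k<t}x_ky_k$, $\beta_t=\rho\sqrt{d\log\left(\frac{1+(t-1)/\lambda}{\delta/2}\right)}+\sqrt\lambda S$, $\|x\|_M=\sqrt{x^\top Mx}$; $\mathcal{Y}_t^p=\{x\in\mathcal{X}:\hat a_t^\top x+\beta_t\|x\|_{V_t^{-1}}\le b\}$, $\mathcal{Y}_t^o=\{x\in\mathcal{X}:\hat a_t^\top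 x-\beta_t\|x\|_{V_t^{-1}}\le b\}$; $\tilde x_t\in\arg\max_{x\in\mathcal{Y}_t^o}(\hat\theta_t^\top x+\beta_t\|x\|_{V_t^{-1}})$; $\gamma_t=\max(\min(\nu/\|\tilde x_t\|,1),\max\{\mu\in[0,1]:\mu\tilde x_t\in\mathcal{Y}_t^p\})$; play $x_t=\gamma_t\tilde x_t$. $\mathcal{E}_{\mathrm{conf}}$: the event that $|x^\top(\hat\theta_t-\theta)|\le\beta_t\|x\|_{V_t^{-1}}$ and $|x^\top(\hat a_t-a)|\le\beta_t\|x\|_{V_t^{-1}}$ for all $x\in\mathcal{X}$ and all $t\ge1$. *)

(* Defs.v *)
From HB Require Import structures.
From mathcomp Require Import all_boot all_order all_algebra.
From mathcomp Require Import all_classical all_reals all_analysis.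
Set Implicit Arguments. Unset Strict Implicit. Unset Printing Implicit Defensive.
Import Order.TTheory GRing.Theory Num.Theory.
Local Open Scope ring_scope.
Local Open Scope classical_set_scope.

Section Defs.
Variables (R : realType) (d : nat).
Notation vec := 'cV[R]_d.

Definition dotp (u v : vec) : R := (u^T *m v) 0 0.
Definition enorm (x : vec) : R := Num.sqrt (dotp x x).
Definition wnorm (M : 'M[R]_d) (x : vec) : R := Num.sqrt ((x^T *m M *m x) 0 0).

Definition Vmat (lam : R) (x : nat -> vec) (t : nat) : 'M[R]_d :=
  lam%:M + \sum_(1 <= k < t) (x k *m (x k)^T).
Definition rls (lam : R) (x : nat -> vec) (w : nat -> R) (t : nat) : vec :=
  invmx (Vmat lam x t) *m \sum_(1 <= k < t) (w k *: x k).
Definition beta (rho delta lam S : R) (t : nat) : R :=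
  rho * Num.sqrt (d%:R * ln ((1 + (t.-1)%:R / lam) / (delta / 2)))
  + Num.sqrt lam * S.

Definition Yp (X : set vec) (ahat : vec) (bt b : R) (Vinv : 'M[R]_d) : set vec :=
  [set x | X x /\ dotp ahat x + bt * wnorm Vinv x <= b].
Definition Yo (X : set vec) (ahat : vec) (bt b : R) (Vinv : 'M[R]_d) : set vec :=
  [set x | X x /\ dotp ahat x - bt * wnorm Vinv x <= b].

(* gamma_t = max( min(nu/||xt||, 1), max{mu in [0,1] : mu xt in Yp} ),
   with the convention nu/0 = +oo (so min(nu/0,1) = 1). *)
Definition gamma_scale (nu : R) (xt : vec) (Ypt : set vec) : R :=
  Num.max (if enorm xt == 0 then 1 else Num.min (nu / enorm xt) 1)
          (sup [set mu : R | 0 <= mu <= 1 /\ Ypt (mu *: xt)]).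
End Defs.

(* Main.v *)
Require Import Defs.
From HB Require Import structures.
From mathcomp Require Import all_boot all_order all_algebra.
From mathcomp Require Import all_classical all_reals all_analysis.
From mathcomp Require Import lra ring.
Import Order.TTheory GRing.Theory Num.Theory.
Local Open Scope ring_scope.
Local Open Scope classical_set_scope.


Lemma dotpE (R : realType) (d : nat) (u v : 'cV[R]_d) :
  dotp u v = \sum_i u i 0 * v i 0.
Proof. rewrite /dotp mxE; apply: eq_bigr => i _; by rewrite mxE. Qed.

Lemma dotpC (R : realType) (d : nat) (u v : 'cV[R]_d) : dotp u v = dotp v u.
Proof. rewrite !dotpE; apply: eq_bigr => i _; by rewrite mulrC. Qed.

Lemma dotpBr (R : realType) (d : nat) (u v w : 'cV[R]_d) :
  dotp u (v - w) = dotp u v - dotp u w.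
Proof.
rewrite !dotpE -sumrB; apply: eq_bigr => i _; by rewrite !mxE mulrBr.
Qed.

Lemma wnormZ (R : realType) (d : nat) (M : 'M[R]_d) (g : R) (v : 'cV[R]_d) :
  0 <= g -> wnorm M (g *: v) = g * wnorm M v.
Proof.
move=> g0; rewrite /wnorm; have -> : (g *: v)^T = g *: v^T by apply/matrixP => i j; rewrite !mxE.
rewrite -!scalemxAl -scalemxAr scalerA mxE.
rewrite sqrtrM ?mulr_ge0 // -expr2 sqrtr_sqr ger0_norm //.
Qed.

Lemma wnorm_ge0 (R : realType) (d : nat) (M : 'M[R]_d) (v : 'cV[R]_d) :
  0 <= wnorm M v.
Proof. exact: sqrtr_ge0. Qed.
Theorem lemma4 (R : realType) (d : nat) (X : set 'cV[R]_d)
  (theta a : 'cV[R]_d) (b Sa Stheta rho delta lam : R) (T : nat)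
  (x xt : nat -> 'cV[R]_d) (eps eta : nat -> R) (xstar : 'cV[R]_d) :
  (* standing assumptions *)
  closed (X : set 'M[R^o]_(d, 1)) ->
  (forall x0, X x0 -> forall mu : R, 0 <= mu <= 1 -> X (mu *: x0)) ->
  (forall x0, X x0 -> enorm x0 <= 1) ->
  0 < b -> 0 < Sa ->
  enorm a <= Sa -> enorm theta <= Stheta ->
  b / Sa <= 1 ->
  0 < rho -> 0 < delta < 1 -> 1 <= lam ->
  (* x_* is an optimal safe action *)
  X xstar -> dotp a xstar <= b ->
  (forall x0, X x0 -> dotp a x0 <= b -> dotp theta x0 <= dotp theta xstar) ->
  0 < dotp theta xstar ->
  let S := Num.max Sa Stheta in
  let nu := b / Sa in
  let y := fun k => dotp theta (x k) + eps k in
  let z := fun k => dotp a (x k) + eta k in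
  let V := Vmat lam x in
  let Vinv := fun t => invmx (V t) in
  let ahat := rls lam x z in
  let thhat := rls lam x y in
  let bt := beta d rho delta lam S in
  let Ypt := fun t => Yp X (ahat t) (bt t) b (Vinv t) in
  let Yot := fun t => Yo X (ahat t) (bt t) b (Vinv t) in
  (* ROFUL: xt t is a maximizer of the UCB over the optimistic set,
     and the played action is x t = gamma_t xt t *)
  (forall t, (1 <= t)%N ->
     Yot t (xt t) /\
     (forall x0, Yot t x0 ->
        dotp (thhat t) x0 + bt t * wnorm (Vinv t) x0
        <= dotp (thhat t) (xt t) + bt t * wnorm (Vinv t) (xt t)) /\
     x t = gamma_scale nu (xt t) (Ypt t) *: xt t) ->
  (* the event E_conf *)
  (forall t, (1 <= t)%N -> forall x0, X x0 ->
     `|dotp x0 (thhat t - theta)| <= bt t * wnorm (Vinv t) x0 /\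
     `|dotp x0 (ahat t - a)| <= bt t * wnorm (Vinv t) x0) ->
  forall t, (1 <= t <= T)%N ->
    dotp theta (xstar - xt t) <= 2 / nu * bt t * wnorm (Vinv t) (x t).


Proof.
move=> _ _ Xn b0 Sa0 _ _ nu1 rho0 _ lam1 Xs Xsb _ _ S nu y z V Vinv ahat thhat bt Ypt Yot Hrof Hconf t /andP[t1 _].
have [Hy [Hmax Hx]] := Hrof t t1.
have [Xxt _] : X (xt t) /\ True by move: Hy; rewrite /Yot /Yo /= => -[]; split.
have nu0 : 0 < nu by rewrite /nu divr_gt0.
have S0 : 0 < S by rewrite /S lt_max Sa0.
have bt0 : 0 <= bt t.
  rewrite /bt /beta addr_ge0 // ?mulr_ge0 ?sqrtr_ge0 ?(ltW rho0) ?(ltW S0) //.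
have [Hs1 Hs2] := Hconf t t1 xstar Xs.
have [Hx1 _] := Hconf t t1 (xt t) Xxt.
have Ys : Yot t xstar.
  split => //.
  rewrite dotpBr dotpC [dotp xstar a]dotpC in Hs2.
  have := ler_norm (dotp (ahat t) xstar - dotp a xstar).
  move: Hs2; rewrite /= -/(Vinv t) -/(bt t) => Hs2 Hn.
  rewrite ler_norml in Hs2; lra.
have H1 := Hmax xstar Ys.
rewrite dotpBr dotpC [dotp xstar theta]dotpC ler_norml in Hs1.
rewrite dotpBr dotpC [dotp (xt t) theta]dotpC ler_norml in Hx1.
have key : dotp theta xstar - dotp theta (xt t) <= 2 * bt t * wnorm (Vinv t) (xt t).
  move/andP: Hs1 => [Hs1 _]; move/andP: Hx1 => [_ Hx1].
  lra.
set gam := gamma_scale nu (xt t) (Ypt t) in Hx.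
have gnu : nu <= gam.
  rewrite /gam /gamma_scale le_max; apply/orP; left.
  have e1 := Xn _ Xxt.
  case: eqP => [_ |/eqP en0]; first by [].
  have e0 : 0 < enorm (xt t) by rewrite lt_def en0 sqrtr_ge0.
  rewrite le_min nu1 andbT ler_pdivlMr //; nra.
have g0 : 0 <= gam by apply: le_trans gnu; apply: ltW.
rewrite dotpBr Hx wnormZ //.
have W0 := @wnorm_ge0 _ _ (Vinv t) (xt t).
have g1 : 1 <= gam / nu by rewrite ler_pdivlMr // mul1r.
have -> : 2 / nu * bt t * (gam * wnorm (Vinv t) (xt t)) =
  (2 * bt t * wnorm (Vinv t) (xt t)) * (gam / nu) by rewrite /= mulrC; field; exact: lt0r_neq0.
have P0 : 0 <= 2 * bt t * wnorm (Vinv t) (xt t) by rewrite !mulr_ge0.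
apply: le_trans key _; rewrite ler_peMr //.
Qed.
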